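(* Assume the model (M.2) with $M_0>0$ and the sub-Gaussian condition (A.4) described in the context, and let Algorithm 2 be applied to $X_1,\ldots,X_N$. (i) For $k\in\{1,\ldots,M_0\}$ let $q_k(N)=250D\log N/(c_0|\mu_k-\mu_{k+1}|^2)$, and let $F_{k,N}$ be the event that there exist integers $1\le n_1<n_2<N_k$ and $1\le n_3\le N_{k+1}$ such that $\{X^{(k)}_n:n=n_1+1,\ldots,n_2\}$ and $\{X^{(k)}_n:n=n_2+1,\ldots,N_k\}\cup\{X^{(k+1)}_n:n=1,\ldots,n_3\}$ are two detected segments and $\min\{N_k-n_2,n_3\}>q_k(N)$. Then $\Pr(\limsup_{N\to\infty}F_{k,N})=0$. (ii) For $k\in\{2,\ldots,M_0+1\}$ let $\tilde q_k(N)=250D\log N/(c_0|\mu_{k-1}-\mu_k|^2)$, and let $\tilde F_{k,N}$ be the event that there exist integers $1\le n_1<n_2<N_k$ and $1\le n_3\le N_{k-1}$ such that $\{X^{(k-1)}_n:n=N_{k-1}-n_3+1,\ldots,N_{k-1}\}\cup\{X^{(k)}_n:n=1,\ldots,n_1\}$ and $\{X^{(k)}_n:n=n_1+1,\ldots,n_2\}$ are two detected segments and $\min\{n_1,n_3\}>\tilde q_k(N)$. Then $\Pr(\limsup_{N\to\infty}\tilde F_{k,N})=0$.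
   Context: Model (M.2): for each sample size $N$ one observes independent random vectors $X_1,\ldots,X_N\in\mathbb{R}^D$ ($D\in\mathbb{N}$ fixed). There are $M_0\ge 0$ (fixed) change points $0=L_0<L_1<\cdots<L_{M_0}<L_{M_0+1}=N$ (depending on $N$), with segment sizes $N_k=L_k-L_{k-1}$, $N_k\to\infty$; for each $k$, $X_{L_{k-1}+1},\ldots,X_{L_k}$ are i.i.d. with distribution $\mathcal{G}_k$ with mean $\mu_k$ and finite covariance; $\mu_k\neq\mu_{k+1}$. Write $X^{(k)}_n=X_{L_{k-1}+n}$, $n=1,\ldots,N_k$. (A.4): there is $c_0>0$ such that for every $k$, coordinate $d$, $n\ge1$ and $a>0$, the mean $\bar Z$ of $n$ i.i.d. copies of the $d$-th marginal of $\mathcal{G}_k$ satisfies $\Pr(|\bar Z-E\bar Z|\ge a)\le2e^{-c_0a^2n}$. Quadratic loss: $\mathrm{Loss}_q(x_a,\ldots,x_b)=\sum_{n=a}^b|x_n-\bar x|^2$, $\bar x$ the sample mean, $|\cdot|$ Euclidean norm. Algorithm 2 (inputs $M_{\max}\ge1$, penalty $f(N)>0$, minimal segment size $\beta(N)$): for $k=0,1,\ldots,M_{\max}$ compute $\hat e_k=\min\sum_{j=1}^{k+1}\mathrm{Loss}_q(x_{\ell_{j-1}+1},\ldots,x_{\ell_j})$ over $0=\ell_0<\ell_1<\cdots<\ell_{k+1}=N$ with a minimizer; if its smallest segment has size $<\beta(N)$, set $M=k-1$ and stop (else $M=M_{\max}$). Output $\hat M=\arg\min_{0\le k\le M}(\hat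 e_k+kf(N))$ and the change points $\hat\ell_1<\cdots<\hat\ell_{\hat M}$ of the minimizer for $k=\hat M$. The detected segments are the blocks $\{X_n:n=\hat\ell_{j-1}+1,\ldots,\hat\ell_j\}$, $j=1,\ldots,\hat M+1$ ($\hat\ell_0=0,\hat\ell_{\hat M+1}=N$); ''two detected segments'' means two neighboring ones, in the order listed. $\limsup_N E_N$ is the event that $E_N$ occurs for infinitely many $N$. *)

(* Defs.v *)
From HB Require Import structures.
From mathcomp Require Import all_boot all_order all_algebra.
From mathcomp Require Import all_classical all_reals all_analysis.
Set Implicit Arguments. Unset Strict Implicit. Unset Printing Implicit Defensive.
Import Order.TTheory GRing.Theory Num.Theory.
Local Open Scope classical_set_scope.
Local Open Scope ring_scope.

Definition vec_event {T R : Type} (m : nat) (Z : 'I_m -> T -> R)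
    (A : 'I_m -> set R) : set T :=
  \big[setI/setT]_(i < m) (Z i @^-1` A i).

(* mutual independence of the random vectors (Z n)_{n in S}
   (product rule over every finite subfamily, for all Borel rectangles,
   which generate the product sigma-algebra of R^m) *)
Definition indep_vectors {d} {T : measurableType d} {R : realType}
    (P : probability T R) (m : nat) (S : seq nat) (Z : nat -> 'I_m -> T -> R) :
    Prop :=
  forall (J : seq nat), uniq J -> {subset J <= S} ->
  forall A : nat -> 'I_m -> set R, (forall n i, measurable (A n i)) ->
  P (\big[setI/setT]_(n <- J) vec_event (Z n) (A n))
  = (\prod_(n <- J) P (vec_event (Z n) (A n)))%E.

Definition indep_reals {d} {T : measurableType d} {R : realType}
    (P : probability T R) (S : seq nat) (Y : nat -> T -> R) : Prop :=
  indep_vectors P S (fun n (_ : 'I_1) => Y n).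

Definition infinitely_often {T : Type} (E : nat -> set T) : set T :=
  [set w | forall N0 : nat, exists2 N : nat, (N0 <= N)%N & E N w].

(* data: x : nat -> 'I_D -> R, the observations are x 1, ..., x N           *)

Section Algorithm.
Variables (R : realType) (D : nat).
Implicit Types (x : nat -> 'I_D -> R).

Definition block_mean x (a b : nat) (d : 'I_D) : R :=
  (\sum_(a.+1 <= n < b.+1) x n d) / (b - a)%:R.

Definition loss_q x (a b : nat) : R :=
  \sum_(a.+1 <= n < b.+1) \sum_(d < D) (x n d - block_mean x a b d) ^+ 2.

Definition bounds (N : nat) (ls : seq nat) : seq nat := 0%N :: rcons ls N.

Definition is_seg (N k : nat) (ls : seq nat) : Prop :=
  size ls = k /\ sorted ltn (bounds N ls).

Definition seg_cost x (N : nat) (ls : seq nat) : R :=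
  \sum_(j < (size ls).+1)
     loss_q x (nth 0%N (bounds N ls) j) (nth 0%N (bounds N ls) j.+1).

Definition is_minimizer x (N k : nat) (ls : seq nat) : Prop :=
  is_seg N k ls /\ forall ls', is_seg N k ls' -> seg_cost x N ls <= seg_cost x N ls'.

Definition small_seg (N : nat) (beta : R) (ls : seq nat) : bool :=
  has (fun j => ((nth 0%N (bounds N ls) j.+1 - nth 0%N (bounds N ls) j)%:R < beta))
      (iota 0 (size ls).+1).

(* (Mhat, ls) is an output of Algorithm 2 on x_1..x_N with inputs Mmax,
   penalty fN = f(N) and minimal segment size betaN = beta(N), for SOME
   choice of the minimizers computed by the algorithm (sol k is the
   minimizer chosen for k change points; M is the value of M at stop). *)
Definition alg2_output x (N Mmax : nat) (fN betaN : R) (Mhat : nat)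
    (ls : seq nat) : Prop :=
  exists (sol : nat -> seq nat) (M : nat),
    [/\ (M = Mmax /\ forall k, (k <= Mmax)%N ->
            is_minimizer x N k (sol k) /\ ~~ small_seg N betaN (sol k))
        \/ [/\ (M < Mmax)%N,
               forall k, (k <= M.+1)%N -> is_minimizer x N k (sol k),
               forall k, (k <= M)%N -> ~~ small_seg N betaN (sol k) &
               small_seg N betaN (sol M.+1)],
        (Mhat <= M)%N,
        forall k, (k <= M)%N ->
          seg_cost x N (sol Mhat) + Mhat%:R * fN <= seg_cost x N (sol k) + k%:R * fN
      & ls = sol Mhat].

(* the detected segments are the blocks (b_j, b_(j+1)], b = bounds N ls;
   "two detected segments" (b_j, b_(j+1)] and (b_(j+1), b_(j+2)] *)
Definition two_detected (N : nat) (ls : seq nat) (a b c : nat) : Prop :=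
  exists j : nat, [/\ (j.+2 <= (size ls).+1)%N,
    nth 0%N (bounds N ls) j = a,
    nth 0%N (bounds N ls) j.+1 = b &
    nth 0%N (bounds N ls) j.+2 = c].

End Algorithm.

Definition sqdist {R : realType} {D : nat} (u v : 'I_D -> R) : R :=
  \sum_(d < D) (u d - v d) ^+ 2.

(* Main.v *)
Require Import Defs.
From HB Require Import structures.
From mathcomp Require Import all_boot all_order all_algebra.
From mathcomp Require Import all_classical all_reals all_analysis.
From mathcomp Require Import ring lra zify.
Import Order.TTheory GRing.Theory Num.Theory.
Local Open Scope classical_set_scope.
Local Open Scope ring_scope.
Set Warnings "-all".
Section Core.
Variable R : realType.

Lemma core (G u v r s Δ Su Sv Sr Ss Suv Srs : R) :
  0 < G -> 0 < Δ -> 250 * G / Δ < u -> 250 * G / Δ < v -> 0 < r -> 0 < s ->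
  Δ / 2 - 2 * (Su + Sv) <= Suv -> Su <= 4 * G / u -> Sv <= 4 * G / v ->
  Srs <= 2 * (Sr + Ss) -> Sr <= 4 * G / r -> Ss <= 4 * G / s ->
  r * s / (r + s) * Srs < u * v / (u + v) * Suv.
Proof.
move=> G0 D0 qu qv r0 s0 hSuv hSu hSv hSrs hSr hSs.
have q0 : 0 < 250 * G / Δ by apply: divr_gt0 => //; lra.
have u0 : 0 < u by lra.
have v0 : 0 < v by lra.
have small : r * s / (r + s) * Srs <= 8 * G.
  have -> : 8 * G = r * s / (r + s) * (8 * G / r + 8 * G / s).
    by field; apply/andP; split; [lra|apply/andP; split; lra].
  apply: ler_wpM2l; first by apply: divr_ge0; nra.
  have : Srs <= 2 * (4 * G / r + 4 * G / s) by lra.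
  suff -> : 2 * (4 * G / r + 4 * G / s) = 8 * G / r + 8 * G / s by [].
  by field; lra.
have hu : 8 * G / u < 8 * Δ / 250.
  rewrite ltr_pdivrMr // mulrAC ltr_pdivlMr; last lra.
  by move: qu; rewrite ltr_pdivrMr //; nra.
have hv : 8 * G / v < 8 * Δ / 250.
  rewrite ltr_pdivrMr // mulrAC ltr_pdivlMr; last lra.
  by move: qv; rewrite ltr_pdivrMr //; nra.
have hS : 109 * Δ / 250 < Suv.
  have e1 : 2 * Su <= 8 * G / u by move: hSu; rewrite -!mulrA; lra.
  have e2 : 2 * Sv <= 8 * G / v by move: hSv; rewrite -!mulrA; lra.
  lra.
have hq : 125 * G / Δ < u * v / (u + v).
  rewrite ltr_pdivlMr; last lra.
  have -> : 125 * G / Δ * (u + v) = (250 * G / Δ) * (u + v) / 2 by field; lra.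
  set q := 250 * G / Δ in q0 qu qv *.
  nra.
have big : 125 * G / Δ * (109 * Δ / 250) < u * v / (u + v) * Suv.
  apply: ltr_pM => //.
  - by apply: divr_ge0; lra.
  - by apply: divr_ge0; lra.
have e : 125 * G / Δ * (109 * Δ / 250) = 109 * G / 2 by field; lra.
rewrite e in big.
lra.
Qed.
End Core.
Section Sq.
Variable R : realType.
Variable D : nat.
Implicit Types p q a b g : 'I_D -> R.

Lemma sq_lower p q a b :
  sqdist a b / 2 - 2 * (sqdist p a + sqdist q b) <= sqdist p q.
Proof.
rewrite /sqdist mulr_suml -!big_split /= mulr_sumr -sumrB.
apply: ler_sum => i _.
have := sqr_ge0 (a i - b i + 2 * (p i - a i - (q i - b i))).
have := sqr_ge0 (p i - a i + (q i - b i)).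
nra.
Qed.

Lemma sq_upper p q g : sqdist p q <= 2 * (sqdist p g + sqdist q g).
Proof.
rewrite /sqdist -big_split /= mulr_sumr.
apply: ler_sum => i _.
have := sqr_ge0 (p i - g i + (q i - g i)).
nra.
Qed.

Lemma sq_bound p a (c : R) : (forall i, (p i - a i) ^+ 2 <= c) -> sqdist p a <= D%:R * c.
Proof.
move=> h; rewrite /sqdist.
apply: (le_trans (ler_sum _ (fun i _ => h i))).
by rewrite sumr_const card_ord mulr_natl.
Qed.
End Sq.

Section Loss.
Variable R : realType.
Variable D : nat.
Implicit Types x : nat -> 'I_D -> R.

Definition bsum x s e d := \sum_(s.+1 <= n < e.+1) x n d.
Definition bsq x s e d := \sum_(s.+1 <= n < e.+1) x n d ^+ 2.

Lemma loss_alt x s e : (s < e)%N ->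
  loss_q x s e = \sum_(d < D) (bsq x s e d - bsum x s e d ^+ 2 / (e - s)%:R).
Proof.
move=> se; rewrite /loss_q exchange_big /=; apply: eq_bigr => d _.
rewrite /block_mean -/(bsum x s e d).
set m := bsum x s e d / (e - s)%:R.
have -> : \sum_(s.+1 <= n < e.+1) (x n d - m) ^+ 2 =
  \sum_(s.+1 <= n < e.+1) (x n d ^+ 2 - 2 * m * x n d + m ^+ 2).
  by apply: eq_bigr => n _; ring.
rewrite big_split sumrB /= -mulr_sumr -/(bsq x s e d) -/(bsum x s e d).
rewrite sumr_const_nat subSS.
have n0 : (e - s)%:R != 0 :> R by rewrite pnatr_eq0 subn_eq0 -ltnNge.
rewrite /m -[_ *+ (e - s)]mulr_natr.
move: n0; set n := (e - s)%:R => n0.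
by field.
Qed.

Lemma bsum_cat x d {a b c} : (a <= b <= c)%N -> bsum x a c d = bsum x a b d + bsum x b c d.
Proof. by move=> /andP[ab bc]; rewrite /bsum (big_cat_nat _ (n:=b.+1)). Qed.
Lemma bsq_cat x d {a b c} : (a <= b <= c)%N -> bsq x a c d = bsq x a b d + bsq x b c d.
Proof. by move=> /andP[ab bc]; rewrite /bsq (big_cat_nat _ (n:=b.+1)). Qed.

Definition Hb x a b c : R :=
  (b - a)%:R * (c - b)%:R / ((b - a)%:R + (c - b)%:R) *
  sqdist (block_mean x a b) (block_mean x b c).

Lemma decomp x a b c : (a < b)%N -> (b < c)%N ->
  loss_q x a c = loss_q x a b + loss_q x b c + Hb x a b c.
Proof.
move=> ab bc.
have ac : (a < c)%N by apply: ltn_trans bc.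
rewrite !loss_alt // /Hb /sqdist mulr_sumr -!big_split /=.
apply: eq_bigr => d _.
have abc : (a <= b <= c)%N by rewrite (ltnW ab) (ltnW bc).
rewrite (bsum_cat x d abc) (bsq_cat x d abc).
have -> : block_mean x a b d = bsum x a b d / (b - a)%:R by [].
have -> : block_mean x b c d = bsum x b c d / (c - b)%:R by [].
have -> : (c - a)%N = ((b - a) + (c - b))%N by lia.
rewrite natrD.
have h1 : (b - a)%:R != 0 :> R by rewrite pnatr_eq0 subn_eq0 -ltnNge.
have h2 : (c - b)%:R != 0 :> R by rewrite pnatr_eq0 subn_eq0 -ltnNge.
have h3 : (b - a)%:R + (c - b)%:R != 0 :> R.
  by rewrite -natrD pnatr_eq0 addn_eq0 negb_and subn_eq0 -ltnNge ab.
move: h1 h2 h3; set n1 := (b - a)%:R; set n2 := (c - b)%:R => h1 h2 h3.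
set S1 := bsum x a b d; set S2 := bsum x b c d; set Q1 := bsq x a b d; set Q2 := bsq x b c d.
by field; rewrite h1 h2 h3.
Qed.
End Loss.
Arguments bounds : simpl never.
Lemma size_bounds N l : size (bounds N l) = (size l).+2.
Proof. by rewrite /bounds /= size_rcons. Qed.

Section Swap.
Variable R : realType.
Variable D : nat.
Implicit Types x : nat -> 'I_D -> R.

Lemma nth_bounds_set N ls j b' i : (j < size ls)%N ->
  nth 0%N (bounds N (set_nth 0%N ls j b')) i =
  if i == j.+1 then b' else nth 0%N (bounds N ls) i.
Proof.
move=> js; rewrite /bounds; case: i => [|i] //=.
rewrite !nth_rcons size_set_nth (maxn_idPr js) nth_set_nth /= eqSS.
case: (i =P j) => [->|_] //; by rewrite js.
Qed.

Lemma sum2 (F : nat -> R) j n : (j.+2 <= n)%N ->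
  \sum_(i < n) F i = F j + F j.+1 + \sum_(i < n | ((i : nat) != j) && ((i : nat) != j.+1)) F i.
Proof.
move=> h.
have h0 : (j < n)%N by lia.
transitivity (F j + (F j.+1 + \sum_(i < n | true && (i != Ordinal h0) && (i != Ordinal h)) F i)).
  rewrite (bigD1 (Ordinal h0)) // (bigD1 (Ordinal h)) //.
  by rewrite andTb -val_eqE /=; lia.
by rewrite addrA; congr (_ + _).
Qed.

Lemma swap_seg x N k ls j b' :
  is_minimizer x N k ls -> (j.+2 <= (size ls).+1)%N ->
  (nth 0%N (bounds N ls) j < b' < nth 0%N (bounds N ls) j.+2)%N ->
  loss_q x (nth 0%N (bounds N ls) j) (nth 0%N (bounds N ls) j.+1) +
  loss_q x (nth 0%N (bounds N ls) j.+1) (nth 0%N (bounds N ls) j.+2) <=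
  loss_q x (nth 0%N (bounds N ls) j) b' + loss_q x b' (nth 0%N (bounds N ls) j.+2).
Proof.
move=> [[sz so] hmin] hj /andP[h1 h2].
have js : (j < size ls)%N by lia.
set ls' := set_nth 0%N ls j b'.
have sz' : size ls' = size ls by rewrite size_set_nth; apply/maxn_idPr.
have nb := fun i => @nth_bounds_set N ls j b' i js.
have seg' : is_seg N k ls'.
  split; first by rewrite sz'.
  apply/(sortedP 0%N) => i; rewrite size_bounds sz' => hi.
  rewrite !nb.
  move/(sortedP 0%N): so; rewrite size_bounds => so.
  have so' := so i hi.
  case: (i =P j.+1) => [->|ij].
    rewrite ?eqxx (_ : (j.+2 == j.+1) = false) //; lia.
  case: (i.+1 =P j.+1) => [[->]|ij2].
    exact: h1.
  exact: so'.
have := hmin _ seg'.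
rewrite /seg_cost sz' (sum2 (fun i => loss_q x (nth 0%N (bounds N ls) i) (nth 0%N (bounds N ls) i.+1)) j (size ls).+1 hj).
rewrite (sum2 (fun i => loss_q x (nth 0%N (bounds N ls') i) (nth 0%N (bounds N ls') i.+1)) j (size ls).+1 hj).
cbv beta; rewrite !nb eqxx.
have e1 : (j == j.+1) = false by lia.
have e2 : (j.+2 == j.+1) = false by lia.
rewrite ?e1 ?e2.
have -> : \sum_(i < (size ls).+1 | ((i : nat) != j) && ((i : nat) != j.+1))
   loss_q x (nth 0%N (bounds N ls') i) (nth 0%N (bounds N ls') i.+1) =
   \sum_(i < (size ls).+1 | ((i : nat) != j) && ((i : nat) != j.+1))
   loss_q x (nth 0%N (bounds N ls) i) (nth 0%N (bounds N ls) i.+1).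
  apply: eq_bigr => i /andP[hi1 hi2]; rewrite /ls' !nb.
  have -> : ((i : nat) == j.+1) = false by lia.
  have -> : ((i : nat).+1 == j.+1) = false by lia.
  by [].
lra.
Qed.
End Swap.
Section Prob.
Context {d : measure_display} {T : measurableType d} {R : realType}.
Variable P : probability T R.
Local Open Scope ereal_scope.

Lemma mu_bigU (I : Type) (r : seq I) (F : I -> set T) :
  (forall i, measurable (F i)) ->
  P (\big[setU/set0]_(i <- r) F i) <= \sum_(i <- r) P (F i).
Proof.
move=> mF; elim: r => [|i r IH]; first by rewrite !big_nil measure0.
rewrite !big_cons.
have mU : measurable (\big[setU/set0]_(j <- r) F j).
  by apply: bigsetU_measurable => j _; exact: mF.
move: (measureU2 P (mF i) mU) => /le_trans; apply; exact: leeD2l.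
Qed.

Lemma ub_bigU n (F : 'I_n -> set T) (c : R) :
  (forall i, measurable (F i)) -> (forall i, P (F i) <= c%:E) ->
  P (\big[setU/set0]_(i < n) F i) <= (n%:R * c)%:E.
Proof.
move=> mF hF; apply: (le_trans (@mu_bigU _ _ _ mF)).
have -> : (n%:R * c)%:E = \sum_(i < n) c%:E by rewrite sumEFin sumr_const card_ord mulr_natl.
by apply: lee_sum => i _; exact: hF.
Qed.

Lemma bc_lemma (F B : nat -> set T) (Nst : nat) (C : R) :
  (0 < Nst)%N -> (0 <= C)%R ->
  (forall N, (Nst <= N)%N -> measurable (B N)) ->
  (forall N, (Nst <= N)%N -> P (B N) <= (C * (N%:R^-1 - N.+1%:R^-1))%:E) ->
  (forall N, (Nst <= N)%N -> F N `<=` B N) ->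
  P.-negligible (infinitely_often F).
Proof.
move=> Nst0 C0 mB hB FB.
pose G N := if (Nst <= N)%N then B N else set0.
have mG : forall N, measurable (G N).
  by move=> N; rewrite /G; case: ifP => h; [exact: mB|exact: measurable0].
pose h (n : nat) : R := (if (Nst <= n)%N then n%:R^-1 else Nst%:R^-1)%R.
have hG : forall n, P (G n) <= ((C * (h n - h n.+1))%R)%:E.
  move=> n; rewrite /G /h; case: (leqP Nst n) => hn.
    by rewrite (leq_trans hn (leqnSn n)); exact: hB.
  rewrite measure0 lee_fin; case: leqP => hn1.
    have -> : n.+1 = Nst by apply/eqP; rewrite eqn_leq hn1 hn.
    by rewrite subrr mulr0.
  by rewrite subrr mulr0.
have h0 : forall n, (0 <= h n)%R by move=> n; rewrite /h; case: ifP => _; rewrite invr_ge0.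
have sumfin : \sum_(0 <= n <oo) P (G n) < +oo.
  apply: (le_lt_trans (y := ((C * h 0%N)%R)%:E)); last by rewrite ltry.
  apply: lime_le; first by apply: is_cvg_ereal_nneg_natsum => n _.
  apply: nearW => m.
  apply: (@le_trans _ _ (\sum_(0 <= n < m) ((C * (h n - h n.+1))%R)%:E)).
    by apply: lee_sum => n _; exact: hG.
  rewrite sumEFin lee_fin -mulr_sumr ler_wpM2l //.
  have -> : (\sum_(0 <= i < m) (h i - h i.+1) = - \sum_(0 <= i < m) (h i.+1 - h i))%R.
    by rewrite -sumrN; apply: eq_bigr => i _; rewrite opprB.
  rewrite telescope_sumr // opprB.
  by rewrite lerBlDr lerDl.
have h00 := @lim_sup_set_cvg0 _ _ _ P G mG sumfin.
exists (lim_sup_set G); split => //.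
  by apply: bigcapT_measurable => k; apply: bigcup_measurable => j _.
move=> w iw n _.
have [N hN FN] := iw (maxn n Nst).
exists N; first by move: hN; rewrite /= geq_max => /andP[].
move: hN; rewrite geq_max => /andP[_ hN].
by rewrite /G hN; apply: FB.
Qed.
End Prob.
Section Indep.
Context {d : measure_display} {T : measurableType d} {R : realType}.
Variable P : probability T R.
Variable D : nat.

Lemma vec_coord (Y : 'I_D -> T -> R) i B :
  vec_event Y (fun i' => if i' == i then B else setT) = Y i @^-1` B.
Proof.
rewrite /vec_event (bigD1 i) //= eqxx big1 ?setIT // => i' /negbTE ->.
by rewrite preimage_setT.
Qed.

Lemma vec_one (Y : T -> R) (A : 'I_1 -> set R) :
  vec_event (fun _ : 'I_1 => Y) A = Y @^-1` A ord0.
Proof. by rewrite /vec_event big_ord1. Qed.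

Lemma indep_shift (X : nat -> 'I_D -> {RV P >-> R}) N s n i : (s + n <= N)%N ->
  indep_vectors P (iota 1 N) X -> indep_reals P (iota 1 n) (fun j => X (s + j)%N i).
Proof.
move=> sn hX J uJ sJ A mA.
pose A' (m : nat) (i' : 'I_D) := if i' == i then A (m - s)%N ord0 else setT.
have mA' : forall m i', measurable (A' m i').
  by move=> m i'; rewrite /A'; case: ifP => _; [exact: mA|exact: measurableT].
have uJ' : uniq (map (addn s) J) by rewrite map_inj_uniq //; exact: addnI.
have sJ' : {subset map (addn s) J <= iota 1 N}.
  move=> m /mapP[j jJ ->]; have := sJ j jJ; rewrite !mem_iota; lia.
have := hX _ uJ' sJ' A' mA'.
rewrite !big_map.
have e : forall j, vec_event (X (s + j)%N) (A' (s + j)%N) =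
                   vec_event (fun _ : 'I_1 => X (s + j)%N i) (A j).
  by move=> j; rewrite vec_coord vec_one addKn.
under eq_bigr do rewrite e.
by under [in X in _ = X -> _]eq_bigr do rewrite e.
Qed.
End Indep.
Lemma bigU_mem (T : Type) n (F : 'I_n -> set T) i0 w :
  F i0 w -> (\big[setU/set0]_(i < n) F i) w.
Proof. by move=> h; rewrite (bigD1 i0) //=; left. Qed.

Lemma rate (R : realType) (n : nat) (A : R) : (1 <= n)%N -> 0 <= A ->
  A * (n.+1%:R * (n.+1%:R * (2 * (n%:R ^+ 4)^-1))) <=
  16 * A * (n%:R^-1 - n.+1%:R^-1).
Proof.
move=> n1 A0.
have x1 : 1 <= n%:R :> R by rewrite ler1n.
rewrite [16 * A]mulrC -[A * 16 * _]mulrA; apply: ler_wpM2l => //.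
rewrite -natr1; set x := n%:R.
have x0 : 0 < x by lra.
have e : (x + 1) * ((x + 1) * (2 * (x ^+ 4)^-1)) - 16 * (x^-1 - (x + 1)^-1)
   = (2 * (x + 1) ^+ 3 - 16 * x ^+ 3) / (x ^+ 4 * (x + 1)).
  by field; rewrite gt_eqF //; lra.
rewrite -subr_le0 e; apply: mulr_le0_ge0.
  have : 0 <= (x - 1) * (7 * x ^+ 2 + 3 * x + 1) by apply: mulr_ge0; nra.
  nra.
by rewrite invr_ge0; apply: mulr_ge0; [apply: exprn_ge0|]; lra.
Qed.
Theorem lemma8
  (d : measure_display) (T : measurableType d) (R : realType)
  (P : probability T R)
  (D : nat) (M0 : nat)
  (* X N n = (X N n i)_(i < D) : the n-th observation for sample size N *)
  (X : nat -> nat -> 'I_D -> {RV P >-> R})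
  (* L N k = k-th change point for sample size N *)
  (L : nat -> nat -> nat)
  (* the model is required for all sample sizes N >= N0 *)
  (N0 : nat)
  (mu : nat -> 'I_D -> R) (c0 : R)
  (Mmax : nat) (f beta : nat -> R)
  (* (M.2) *)
  (HM0 : (0 < M0)%N)
  (HL : forall N, (N0 <= N)%N ->
     [/\ L N 0%N = 0%N, L N M0.+1 = N &
         forall k, (k <= M0)%N -> (L N k < L N k.+1)%N])
  (Hsizes : forall k, (1 <= k <= M0.+1)%N ->
     forall m : nat, exists N1 : nat, forall N, (N1 <= N)%N ->
       (m <= L N k - L N k.-1)%N)
  (Hindep : forall N, (N0 <= N)%N -> indep_vectors P (iota 1 N) (X N))
  (Hident : forall k, (1 <= k <= M0.+1)%N ->
     forall N N' n n', (N0 <= N)%N -> (N0 <= N')%N ->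
     (L N k.-1 < n <= L N k)%N -> (L N' k.-1 < n' <= L N' k)%N ->
     forall A : 'I_D -> set R, (forall i, measurable (A i)) ->
       P (vec_event (X N n) A) = P (vec_event (X N' n') A))
  (Hmoments : forall k, (1 <= k <= M0.+1)%N ->
     forall N n, (N0 <= N)%N -> (L N k.-1 < n <= L N k)%N ->
     forall i : 'I_D,
       [/\ P.-integrable setT (EFin \o X N n i),
           P.-integrable setT (EFin \o (fun w => X N n i w ^+ 2)) &
           ('E_P[X N n i] = (mu k i)%:E)%E])
  (Hmu : forall k, (1 <= k <= M0)%N -> mu k <> mu k.+1)
  (* (A.4) *)
  (Hc0 : 0 < c0)
  (HA4 : forall k, (1 <= k <= M0.+1)%N -> forall (i : 'I_D) (n : nat),
     (1 <= n)%N -> forall a : R, 0 < a ->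
     forall (d' : measure_display) (Om : measurableType d')
            (Q : probability Om R) (Z : nat -> {RV Q >-> R}),
     indep_reals Q (iota 1 n) (fun j => Z j) ->
     (forall j, (1 <= j <= n)%N -> forall N m, (N0 <= N)%N ->
        (L N k.-1 < m <= L N k)%N ->
        forall B : set R, measurable B ->
          Q (Z j @^-1` B) = P (X N m i @^-1` B)) ->
     (Q [set w | (a <= `| (\sum_(1 <= j < n.+1) Z j w) / n%:R - mu k i |)%R]
        <= (2 * expR (- (c0 * a ^+ 2 * n%:R)))%:E)%E)
  (* inputs of Algorithm 2 *)
  (HMmax : (1 <= Mmax)%N)
  (Hf : forall N, 0 < f N) :
  let data N := fun w n i => X N n i w in
  let Nk N k := (L N k - L N k.-1)%N in
  (* (i) *)
  (forall k, (1 <= k <= M0)%N ->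
     let q N := 250 * D%:R * ln N%:R / (c0 * sqdist (mu k) (mu k.+1)) in
     let F N := [set w | exists Mhat ls,
         alg2_output (data N w) N Mmax (f N) (beta N) Mhat ls /\
         exists n1 n2 n3 : nat,
           [/\ (1 <= n1 < n2)%N /\ (n2 < Nk N k)%N,
               (1 <= n3 <= Nk N k.+1)%N,
               two_detected N ls (L N k.-1 + n1) (L N k.-1 + n2) (L N k + n3),
               q N < (Nk N k - n2)%:R & q N < n3%:R]] in
     P.-negligible (infinitely_often F))
  /\
  (* (ii) *)
  (forall k, (2 <= k <= M0.+1)%N ->
     let q N := 250 * D%:R * ln N%:R / (c0 * sqdist (mu k.-1) (mu k)) in
     let F N := [set w | exists Mhat ls,
         alg2_output (data N w) N Mmax (f N) (beta N) Mhat ls /\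
         exists n1 n2 n3 : nat,
           [/\ (1 <= n1 < n2)%N /\ (n2 < Nk N k)%N,
               (1 <= n3 <= Nk N k.-1)%N,
               two_detected N ls (L N k.-1 - n3) (L N k.-1 + n1) (L N k.-1 + n2),
               q N < n1%:R & q N < n3%:R]] in
     P.-negligible (infinitely_often F)).
Proof.
move=> data Nk.
have D0 : (0 < D)%N.
  case: (posnP D) => // D0.
  exfalso; apply: (Hmu 1%N); first by lia.
  by apply/funext => i; have := ltn_ord i; rewrite {2}D0.
have Lstep : forall N, (N0 <= N)%N -> forall k, (1 <= k <= M0.+1)%N -> (L N k.-1 < L N k)%N.
  move=> N hN k /andP[k1 kM]; have [_ _ h] := HL N hN.
  by have := h k.-1 ltac:(lia); rewrite prednK.
have Lmono : forall N, (N0 <= N)%N -> forall k k', (k <= k')%N -> (k' <= M0.+1)%N -> (L N k <= L N k')%N.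
  move=> N hN k k' kk'; elim: k' kk' => [|k' IH] kk' kM.
    by rewrite leqn0 in kk'; rewrite (eqP kk').
  case: (ltngtP k k'.+1) kk' => // [hk|->] _; last by [].
  have := Lstep N hN k'.+1 ltac:(lia); rewrite /= => h.
  by apply: leq_trans (IH _ _) (ltnW h); lia.
have LN : forall N, (N0 <= N)%N -> forall k, (k <= M0.+1)%N -> (L N k <= N)%N.
  move=> N hN k hk; have [_ hM _] := HL N hN.
  by rewrite -{2}hM; apply: Lmono.
pose Nst := maxn N0 2.
pose K (N : nat) : R := ln N%:R / c0.
have K0 : forall N, (Nst <= N)%N -> 0 < K N.
  move=> N hN; apply: divr_gt0 => //; apply: ln_gt0.
  by rewrite ltr1n; move: hN; rewrite geq_max => /andP[_]; lia.
pose aa (N n : nat) : R := Num.sqrt (4 * K N / n%:R).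
pose Ev (N k' s e : nat) (i : 'I_D) : set T :=
  if [&& (1 <= k')%N, (k' <= M0.+1)%N, (L N k'.-1 <= s)%N, (s < e)%N & (e <= L N k')%N]
  then [set w | aa N (e - s)%N <= `|(\sum_(1 <= j < (e - s).+1) X N (s + j)%N i w) / (e - s)%:R - mu k' i|]
  else set0.
pose Bad (N : nat) : set T :=
  \big[setU/set0]_(k' < M0.+2) \big[setU/set0]_(s < N.+1) \big[setU/set0]_(e < N.+1)
   \big[setU/set0]_(i < D) Ev N k' s e i.
have mEv : forall N k' s e i, measurable (Ev N k' s e i).
  move=> N k' s e i; rewrite /Ev; case: ifP => _; last exact: measurable0.
  set n := (e - s)%N.
  have mg : measurable_fun setT (fun w => `|(\sum_(1 <= j < n.+1) X N (s + j)%N i w) / n%:R - mu k' i|).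
    apply: measurableT_comp; first exact: measurable_realfun.normr_measurable.
    apply: measurable_realfun.measurable_funB; last exact: measurable_cst.
    apply: measurable_realfun.measurable_funM; last exact: measurable_cst.
    by apply: measurable_sum => j; exact: measurable_funPT.
  have := measurable_realfun.measurable_fun_ler (measurable_cst (aa N n)) mg measurableT (Y := [set true]).
  by rewrite setTI; apply.
have mBad : forall N, measurable (Bad N).
  move=> N; do 4 (apply: bigsetU_measurable => ? _); exact: mEv.
have pEv : forall N, (Nst <= N)%N -> forall k' s e i,
    (P (Ev N k' s e i) <= (2 * (N%:R ^+ 4)^-1)%:E)%E.
  move=> N hN k' s e i.
  have hN0 : (N0 <= N)%N by move: hN; rewrite geq_max => /andP[].
  have hN2 : (2 <= N)%N by move: hN; rewrite geq_max => /andP[].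
  have Nr : 0 < N%:R :> R by rewrite ltr0n; lia.
  rewrite /Ev; case: ifP => hc; last first.
    rewrite measure0 lee_fin; apply: mulr_ge0 => //; rewrite invr_ge0; apply: exprn_ge0; lra.
  move/and5P: hc => [hk1 hkM hs hse he].
  set n := (e - s)%N.
  have n1 : (1 <= n)%N by rewrite /n; lia.
  have nr : 0 < n%:R :> R by rewrite ltr0n.
  have hK := K0 N hN.
  have a0 : 0 < aa N n by rewrite /aa sqrtr_gt0; apply: divr_gt0 => //; lra.
  have hLe := LN N hN0 k' hkM.
  have := HA4 k' ltac:(lia) i n n1 (aa N n) a0 d T P (fun j => X N (s + j)%N i).
  have -> : c0 * aa N n ^+ 2 * n%:R = 4%:R * ln N%:R.
    rewrite /aa sqr_sqrtr; last by apply: divr_ge0 => //; lra.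
    rewrite /K; field; rewrite !gt_eqF //.
  rewrite expRN expRM_natl lnK; last by rewrite posrE.
  apply.
    apply: (@indep_shift _ _ _ P D (X N) N); first by rewrite /n; lia.
    exact: Hindep.
  move=> j hj N' m hN' hm B mB.
  have mA : forall i', measurable ((fun i'' => if i'' == i then B else setT) i').
    by move=> i'; case: ifP => _; [exact: mB|exact: measurableT].
  have := Hident k' ltac:(lia) N N' (s + j)%N m hN0 hN' ltac:(rewrite /n in hj; lia) hm _ mA.
  by rewrite !vec_coord.
pose C : R := 16 * (M0.+2)%:R * D%:R.
have pBad : forall N, (Nst <= N)%N -> (P (Bad N) <= (C * (N%:R^-1 - N.+1%:R^-1))%:E)%E.
  move=> N hN.
  set c : R := 2 * (N%:R ^+ 4)^-1.
  have b4 : forall k' s e, (P (\big[setU/set0]_(i < D) Ev N k' s e i) <= (D%:R * c)%:E)%E.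
    by move=> k' s e; apply: ub_bigU => i; [exact: mEv|exact: pEv].
  have b3 : forall k' s, (P (\big[setU/set0]_(e < N.+1) \big[setU/set0]_(i < D) Ev N k' s e i)
      <= (N.+1%:R * (D%:R * c))%:E)%E.
    move=> k' s; apply: ub_bigU => e; last exact: b4.
    by apply: bigsetU_measurable => i _; exact: mEv.
  have b2 : forall k', (P (\big[setU/set0]_(s < N.+1) \big[setU/set0]_(e < N.+1)
      \big[setU/set0]_(i < D) Ev N k' s e i) <= (N.+1%:R * (N.+1%:R * (D%:R * c)))%:E)%E.
    move=> k'; apply: ub_bigU => s; last exact: b3.
    by do 2 (apply: bigsetU_measurable => ? _); exact: mEv.
  have b1 : (P (Bad N) <= ((M0.+2)%:R * (N.+1%:R * (N.+1%:R * (D%:R * c))))%:E)%E.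
    apply: ub_bigU => k'; last exact: b2.
    by do 3 (apply: bigsetU_measurable => ? _); exact: mEv.
  apply: (le_trans b1); rewrite lee_fin.
  have -> : (M0.+2)%:R * (N.+1%:R * (N.+1%:R * (D%:R * c))) =
            ((M0.+2)%:R * D%:R) * (N.+1%:R * (N.+1%:R * c)) by ring.
  have hr := @rate R N ((M0.+2)%:R * D%:R) ltac:(move: hN; rewrite geq_max => /andP[_]; lia)
     (mulr_ge0 (ler0n _ _) (ler0n _ _)).
  rewrite /c; apply: (le_trans hr).
  by rewrite /C !mulrA.
have good : forall N w, (Nst <= N)%N -> ~ Bad N w -> forall k' s e i,
    (1 <= k' <= M0.+1)%N -> (L N k'.-1 <= s)%N -> (s < e)%N -> (e <= L N k')%N ->
    (block_mean (data N w) s e i - mu k' i) ^+ 2 <= 4 * K N / (e - s)%:R.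
  move=> N w hN nb k' s e i hk hs hse he.
  have hN0 : (N0 <= N)%N by move: hN; rewrite geq_max => /andP[].
  have hLe := LN N hN0 k' ltac:(lia).
  set n := (e - s)%N.
  have nr : 0 < n%:R :> R by rewrite ltr0n /n; lia.
  have hK := K0 N hN.
  set Y := (\sum_(1 <= j < n.+1) X N (s + j)%N i w) / n%:R - mu k' i.
  have nle : ~ (aa N n <= `|Y|).
    move=> h; apply: nb.
    have o1 : (k' < M0.+2)%N by lia.
    have o2 : (s < N.+1)%N by lia.
    have o3 : (e < N.+1)%N by lia.
    apply: (@bigU_mem _ _ _ (Ordinal o1)) => /=.
    apply: (@bigU_mem _ _ _ (Ordinal o2)) => /=.
    apply: (@bigU_mem _ _ _ (Ordinal o3)) => /=.
    apply: (@bigU_mem _ _ _ i) => /=.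
    rewrite /Ev; case: ifP => [_|hF]; first exact: h.
    exfalso; move/negP: hF; apply; apply/and5P; split; lia.
  have hlt : `|Y| < aa N n by rewrite ltNge; apply/negP.
  have e1 : block_mean (data N w) s e i - mu k' i = Y.
    rewrite /Y /block_mean /data; congr (_ / _ - _).
    rewrite -(add1n s) big_addn (_ : (e.+1 - s)%N = n.+1); last by rewrite /n; lia.
    by apply: eq_bigr => j _; rewrite addnC.
  rewrite e1 -[4 * K N / _](@sqr_sqrtr _ (4 * K N / n%:R)); last by apply: divr_ge0 => //; lra.
  rewrite -/(aa N n) -(real_normK (num_real Y)).
  have := normr_ge0 Y; nra.
have coreN : forall N w, (Nst <= N)%N -> ~ Bad N w -> forall ka kb kc p0 p1 p2 r0 r1 r2,
  (1 <= ka <= M0.+1)%N -> (L N ka.-1 <= p0)%N -> (p0 < p1)%N -> (p1 <= L N ka)%N ->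
  (1 <= kb <= M0.+1)%N -> (L N kb.-1 <= p1)%N -> (p1 < p2)%N -> (p2 <= L N kb)%N ->
  (1 <= kc <= M0.+1)%N -> (L N kc.-1 <= r0)%N -> (r0 < r1)%N -> (r1 < r2)%N -> (r2 <= L N kc)%N ->
  mu ka <> mu kb ->
  250 * D%:R * ln N%:R / (c0 * sqdist (mu ka) (mu kb)) < (p1 - p0)%:R ->
  250 * D%:R * ln N%:R / (c0 * sqdist (mu ka) (mu kb)) < (p2 - p1)%:R ->
  @Hb R D (data N w) r0 r1 r2 < @Hb R D (data N w) p0 p1 p2.
  move=> N w hN nb ka kb kc p0 p1 p2 r0 r1 r2 hka h1 h2 h3 hkb h4 h5 h6 hkc h7 h8 h9 h10 hne hq1 hq2.
  have g := good N w hN nb.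
  set x := data N w.
  have hK := K0 N hN.
  set Δ := sqdist (mu ka) (mu kb).
  have Δ0 : 0 < Δ.
    have ge0 : 0 <= Δ by apply: sumr_ge0 => i _; apply: sqr_ge0.
    rewrite lt_neqAle ge0 andbT; apply/negP => /eqP h0; apply: hne; apply/funext => i.
    have : (mu ka i - mu kb i) ^+ 2 <= Δ.
      rewrite /Δ /sqdist (bigD1 i) //= lerDl; apply: sumr_ge0 => j _; apply: sqr_ge0.
    rewrite -h0 => hi; apply/eqP; rewrite -subr_eq0 -sqrf_eq0 eq_le hi sqr_ge0 //.
  have Dr : 0 < D%:R :> R by rewrite ltr0n.
  set G := D%:R * K N.
  have G0 : 0 < G by apply: mulr_gt0.
  have eq : 250 * D%:R * ln N%:R / (c0 * Δ) = 250 * G / Δ.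
    by rewrite /G /K; field; rewrite !gt_eqF.
  rewrite eq in hq1 hq2.
  have sb : forall k' a b, (1 <= k' <= M0.+1)%N -> (L N k'.-1 <= a)%N -> (a < b)%N -> (b <= L N k')%N ->
      sqdist (block_mean x a b) (mu k') <= 4 * G / (b - a)%:R.
    move=> k' a b hk ha hab hb.
    apply: le_trans (@sq_bound R D _ _ (4 * K N / (b - a)%:R) _) _.
      by move=> i; exact: g.
    by rewrite /G !mulrA [D%:R * 4]mulrC.
  rewrite /Hb.
  apply: (@core R G _ _ _ _ Δ _ _ _ _ _ _ G0 Δ0 hq1 hq2).
  - by rewrite ltr0n; lia.
  - by rewrite ltr0n; lia.
  - exact: sq_lower.
  - by apply: (sb ka) => //; lia.
  - by apply: (sb kb) => //; lia.
  - exact: (@sq_upper R D _ _ (mu kc)).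
  - by apply: (sb kc) => //; lia.
  - by apply: (sb kc) => //; lia.
have C0 : 0 <= C by rewrite /C; apply: mulr_ge0; [apply: mulr_ge0|]; rewrite ?ler0n.
have Nst0 : (0 < Nst)%N by rewrite /Nst; lia.
have getmin : forall N w Mhat ls, alg2_output (data N w) N Mmax (f N) (beta N) Mhat ls ->
    is_minimizer (data N w) N Mhat ls.
  move=> N w Mhat ls [sol [M [hc hMM _ ->]]].
  case: hc => [[eM hk']|[hM hm _ _]].
    by rewrite eM in hMM; exact: (hk' Mhat hMM).1.
  by apply: hm; lia.
split.
- case=> [|k] hk q F; first by move: hk.
  apply: (@bc_lemma _ _ _ P F Bad Nst C Nst0 C0) => //.
  move=> N hN w Fw.
  case: (pselect (Bad N w)) => // nb; exfalso.
  have hN0 : (N0 <= N)%N by move: hN; rewrite geq_max => /andP[].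
  case: Fw => Mhat [ls [hout [n1 [n2 [n3 [[h12 h2] h3 htd hq1 hq2]]]]]].
  have hmin := getmin N w Mhat ls hout.
  case: htd => j [hj e0 e1 e2].
  rewrite /Nk /= in h2 h3 hq1 hq2.
  have hL1 := Lstep N hN0 k.+1 ltac:(lia).
  have hL2 := Lstep N hN0 k.+2 ltac:(lia).
  rewrite /= in hL1 hL2.
  set l0 := L N k in h2 hq1 e0 e1 hL1 *.
  set l1 := L N k.+1 in h2 h3 hq1 e0 e1 e2 hL1 hL2 *.
  set l2 := L N k.+2 in h3 hL2 *.
  have sw := @swap_seg R D (data N w) N Mhat ls j l1 hmin hj.
  rewrite e0 e1 e2 in sw.
  have := sw ltac:(apply/andP; split; lia).
  rewrite (@decomp R D _ (l0 + n2) l1 (l1 + n3)); [|lia|lia].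
  rewrite (@decomp R D _ (l0 + n1) (l0 + n2) l1); [|lia|lia].
  move=> hle.
  have c1 : (l0 + n2 < l1)%N by lia.
  have c2 : (l1 < l1 + n3)%N by lia.
  have c3 : (l1 + n3 <= l2)%N by lia.
  have c4 : (l0 <= l0 + n1)%N by lia.
  have c5 : (l0 + n1 < l0 + n2)%N by lia.
  have c6 : (1 <= k.+1 <= M0.+1)%N by lia.
  have c7 : (1 <= k.+2 <= M0.+1)%N by lia.
  have := coreN N w hN nb k.+1 k.+2 k.+1 (l0 + n2) l1 (l1 + n3)
    (l0 + n1) (l0 + n2) l1 c6 (leq_addr _ _) c1 (leqnn _) c7 (leqnn _) c2 c3
    c6 c4 c5 c1 (leqnn _) (Hmu k.+1 hk).
  have e3 : (l1 - (l0 + n2))%N = (l1 - l0 - n2)%N by lia.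
  have e4 : (l1 + n3 - l1)%N = n3 by lia.
  rewrite e3 e4 => /(_ hq1 hq2).
  lra.
- case=> [|[|k]] hk q F; try by move: hk.
  apply: (@bc_lemma _ _ _ P F Bad Nst C Nst0 C0) => //.
  move=> N hN w Fw.
  case: (pselect (Bad N w)) => // nb; exfalso.
  have hN0 : (N0 <= N)%N by move: hN; rewrite geq_max => /andP[].
  case: Fw => Mhat [ls [hout [n1 [n2 [n3 [[h12 h2] h3 htd hq1 hq2]]]]]].
  have hmin := getmin N w Mhat ls hout.
  case: htd => j [hj e0 e1 e2].
  rewrite /Nk /= in h2 h3 hq1 hq2.
  have hL1 := Lstep N hN0 k.+1 ltac:(lia).
  have hL2 := Lstep N hN0 k.+2 ltac:(lia).
  rewrite /= in hL1 hL2.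
  set l0 := L N k in h3 hL1 *.
  set l1 := L N k.+1 in h2 h3 e0 e1 e2 hL1 hL2 *.
  set l2 := L N k.+2 in h2 hL2 *.
  have sw := @swap_seg R D (data N w) N Mhat ls j l1 hmin hj.
  rewrite e0 e1 e2 in sw.
  have := sw ltac:(apply/andP; split; lia).
  rewrite (@decomp R D _ (l1 - n3) l1 (l1 + n1)); [|lia|lia].
  rewrite (@decomp R D _ l1 (l1 + n1) (l1 + n2)); [|lia|lia].
  move=> hle.
  have c1 : (l0 <= l1 - n3)%N by lia.
  have c2 : (l1 - n3 < l1)%N by lia.
  have c3 : (l1 < l1 + n1)%N by lia.
  have c4 : (l1 + n1 <= l2)%N by lia.
  have c5 : (l1 + n1 < l1 + n2)%N by lia.
  have c5' : (l1 + n2 <= l2)%N by lia.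
  have c6 : (1 <= k.+1 <= M0.+1)%N by lia.
  have c7 : (1 <= k.+2 <= M0.+1)%N by lia.
  have := coreN N w hN nb k.+1 k.+2 k.+2 (l1 - n3)%N l1 (l1 + n1)%N
    l1 (l1 + n1)%N (l1 + n2)%N c6 c1 c2 (leqnn _) c7 (leqnn _) c3 c4
    c7 (leqnn _) c3 c5 c5' (Hmu k.+1 ltac:(lia)).
  have e3 : (l1 - (l1 - n3))%N = n3 by lia.
  have e4 : (l1 + n1 - l1)%N = n1 by lia.
  rewrite e3 e4 => /(_ hq2 hq1).
  lra.
Qed.
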